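(* Let $\mathfrak{K}$ be a 2-category, let $\mathscr{A}$ be an object of $\mathfrak{K}$, and let $T=(T,\mu,\eta)$ be a monad on $\mathscr{A}$. Let $G\dashv S$ be an adjunction between endomorphisms $G,S\colon\mathscr{A}\to\mathscr{A}$, with unit $u\colon 1_{\mathscr{A}}\Rightarrow SG$ and counit $e\colon GS\Rightarrow 1_{\mathscr{A}}$. Then adjoint mateship, given on 2-cells by $$\zeta = eTG\circ G\lambda G\circ GTu,\qquad \delta = eTGG\circ G\nu GG\circ GSuG\circ Gu,\qquad \varepsilon = eT\circ G\sigma,$$ (which is a bijection between triples of 2-cells $(\nu\colon SS\Rightarrow ST,\ \sigma\colon 1_{\mathscr{A}}\Rightarrow ST,\ \lambda\colon TS\Rightarrow ST)$ and triples $(\delta\colon G\Rightarrow TGG,\ \varepsilon\colon G\Rightarrow T,\ \zeta\colon GT\Rightarrow TG)$) restricts to a bijection between wreath structures $(\nu,\sigma,\lambda)$ on $S$ around $T$ and mixed opwreath structures $(\zeta,\delta,\varepsilon)$ on $G$ around $T$.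
   Context: Notation: composition of 1-cells is written by juxtaposition ($XY=X\circ Y$), and whiskering of a 2-cell $\alpha$ by 1-cells is written $X\alpha$, $\alpha Y$; $\circ$ between 2-cells is vertical composition. A wreath around the monad $T$ on $\mathscr{A}$ consists of an endomorphism $S$ of $\mathscr{A}$ and 2-cells $\nu\colon SS\Rightarrow ST$, $\sigma\colon 1_{\mathscr{A}}\Rightarrow ST$, $\lambda\colon TS\Rightarrow ST$ satisfying the seven axioms: (W1) $\lambda\circ\mu S = S\mu\circ\lambda T\circ T\lambda$; (W2) $\lambda\circ\eta S = S\eta$; (W3) $S\mu\circ\lambda T\circ T\sigma = S\mu\circ\sigma T$; (W4) $S\mu\circ\nu T\circ S\lambda\circ\lambda S = S\mu\circ\lambda T\circ T\nu$; (W5) $S\mu\circ\nu T\circ S\nu = S\mu\circ\nu T\circ S\lambda\circ\nu S$; (W6) $S\mu\circ\nu T\circ S\sigma = S\eta$; (W7) $S\mu\circ\nu T\circ S\lambda\circ\sigma S = S\eta$. (Equivalently, a wreath is a monad on $(\mathscr{A},T)$ in the 2-category $\mathrm{EM}(\mathfrak{K})$ of monads, morphisms $(F,\phi)$ with $\phi\colon SF\Rightarrow FT$, and 2-cells $\rho\colon F\Rightarrow GS$.) A mixed opwreath around the monad $T$ consists of an endomorphism $G$ of $\mathscr{A}$ and 2-cells $\zeta\colon GT\Rightarrow TG$, $\delta\colon G\Rightarrow TGG$, $\varepsilon\colon G\Rightarrow T$ satisfying the seven axioms: (M1) $\zeta\circ G\mu = \mu G\circ T\zeta\circ\zeta T$;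 (M2) $\zeta\circ G\eta = \eta G$; (M3) $\mu\circ\varepsilon T = \mu\circ T\varepsilon\circ\zeta$; (M4) $\mu GG\circ T\zeta G\circ TG\zeta\circ\delta T = \mu GG\circ T\delta\circ\zeta$; (M5) $\mu GGG\circ T\delta G\circ\delta = \mu GGG\circ T\zeta GG\circ TG\delta\circ\delta$; (M6) $\mu G\circ T\varepsilon G\circ\delta = \eta G$; (M7) $\mu G\circ T\zeta\circ TG\varepsilon\circ\delta = \eta G$. (Equivalently, a comonad on $(\mathscr{A},T)$ in the Kleisli-completion 2-category $\mathrm{KL}(\mathfrak{K})$.) *)

(* Defs.v *)
From mathcomp Require Import ssreflect ssrfun ssrbool.

Set Implicit Arguments.
Unset Strict Implicit.

Definition trc {X : Type} (C : X -> X -> Type) {f f' g g' : X}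
  (e1 : f = f') (e2 : g = g') (c : C f g) : C f' g' :=
  match e1 in _ = f1 return C f1 g' with
  | eq_refl => match e2 in _ = g1 return C f g1 with eq_refl => c end
  end.
Arguments trc {X} C {f f' g g'} e1 e2 c.

(* A (strict) 2-category.  comp1 f g = f o g (i.e. f after g, written fg);
   vcomp b a = b o a (vertical); hcomp b a = Godement product b * a. *)
Record TwoCategory := {
  Obj : Type;
  Hom : Obj -> Obj -> Type;
  Cell : forall a b : Obj, Hom a b -> Hom a b -> Type;
  id1 : forall a, Hom a a;
  comp1 : forall a b c, Hom b c -> Hom a b -> Hom a c;
  id2 : forall a b (f : Hom a b), Cell f f;
  vcomp : forall a b (f g h : Hom a b), Cell g h -> Cell f g -> Cell f h;
  hcomp : forall a b c (f f' : Hom b c) (g g' : Hom a b),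
      Cell f f' -> Cell g g' -> Cell (comp1 f g) (comp1 f' g');
  comp1A : forall a b c d (f : Hom c d) (g : Hom b c) (h : Hom a b),
      comp1 f (comp1 g h) = comp1 (comp1 f g) h;
  comp1l : forall a b (f : Hom a b), comp1 (id1 b) f = f;
  comp1r : forall a b (f : Hom a b), comp1 f (id1 a) = f;
  vcompA : forall a b (f g h k : Hom a b) (x : Cell h k) (y : Cell g h) (z : Cell f g),
      vcomp x (vcomp y z) = vcomp (vcomp x y) z;
  vcomp1l : forall a b (f g : Hom a b) (x : Cell f g), vcomp (id2 g) x = x;
  vcomp1r : forall a b (f g : Hom a b) (x : Cell f g), vcomp x (id2 f) = x;
  hcomp_id : forall a b c (f : Hom b c) (g : Hom a b),
      hcomp (id2 f) (id2 g) = id2 (comp1 f g);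
  interchange : forall a b c (f f' f'' : Hom b c) (g g' g'' : Hom a b)
      (x' : Cell f' f'') (x : Cell f f') (y' : Cell g' g'') (y : Cell g g'),
      hcomp (vcomp x' x) (vcomp y' y) = vcomp (hcomp x' y') (hcomp x y);
  hcompA : forall a b c d (f f' : Hom c d) (g g' : Hom b c) (h h' : Hom a b)
      (x : Cell f f') (y : Cell g g') (z : Cell h h'),
      trc (@Cell a d) (comp1A f g h) (comp1A f' g' h') (hcomp x (hcomp y z))
      = hcomp (hcomp x y) z;
  hcomp1l : forall a b (f f' : Hom a b) (x : Cell f f'),
      trc (@Cell a b) (comp1l f) (comp1l f') (hcomp (id2 (id1 b)) x) = x;
  hcomp1r : forall a b (f f' : Hom a b) (x : Cell f f'),
      trc (@Cell a b) (comp1r f) (comp1r f') (hcomp x (id2 (id1 a))) = x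
}.

Arguments Cell {t a b} _ _.
Arguments id1 {t} a.
Arguments comp1 {t a b c} _ _.
Arguments id2 {t a b} f.
Arguments vcomp {t a b f g h} _ _.
Arguments hcomp {t a b c f f' g g'} _ _.
Arguments comp1A {t a b c d} f g h.
Arguments comp1l {t a b} f.
Arguments comp1r {t a b} f.

Section Endo.
Variables (K : TwoCategory) (A : Obj K).

Local Notation E := (Hom A A).
Local Notation "f ** g" := (comp1 f g) (at level 35, right associativity).
Local Notation I := (id1 A).
Local Notation "b ∘∘ a" := (vcomp b a) (at level 50, left associativity).

Definition cst (f g : E) (e : f = g) : Cell f g :=
  trc (@Cell K A A) eq_refl e (id2 f).

Definition lw (X : E) {f g : E} (a : Cell f g) : Cell (X ** f) (X ** g) :=
  hcomp (id2 X) a.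
Definition rw {f g : E} (a : Cell f g) (X : E) : Cell (f ** X) (g ** X) :=
  hcomp a (id2 X).

(* the (identity) associativity and unit constraint cells of the strict
   2-category, needed only to make the typing of composites explicit *)
Definition asc (X Y Z : E) : Cell (X ** (Y ** Z)) ((X ** Y) ** Z) :=
  cst (comp1A X Y Z).
Definition asc' (X Y Z : E) : Cell ((X ** Y) ** Z) (X ** (Y ** Z)) :=
  cst (esym (comp1A X Y Z)).
Definition lu (X : E) : Cell (I ** X) X := cst (comp1l X).
Definition lu' (X : E) : Cell X (I ** X) := cst (esym (comp1l X)).
Definition ru (X : E) : Cell (X ** I) X := cst (comp1r X).
Definition ru' (X : E) : Cell X (X ** I) := cst (esym (comp1r X)).

Definition is_monad (T : E) (mu : Cell (T ** T) T) (eta : Cell I T) : Prop :=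
  (mu ∘∘ lw T mu = mu ∘∘ rw mu T ∘∘ asc T T T /\
      mu ∘∘ lw T eta = ru T /\
      mu ∘∘ rw eta T = lu T).

Definition is_adjunction (G S : E) (u : Cell I (S ** G)) (e : Cell (G ** S) I)
  : Prop :=
  lu G ∘∘ rw e G ∘∘ asc G S G ∘∘ lw G u ∘∘ ru' G = id2 G /\
  ru S ∘∘ lw S e ∘∘ asc' S G S ∘∘ rw u S ∘∘ lu' S = id2 S.

Variables (T : E) (mu : Cell (T ** T) T) (eta : Cell I T).

Definition is_wreath (S : E) (nu : Cell (S ** S) (S ** T))
  (sigma : Cell I (S ** T)) (lambda : Cell (T ** S) (S ** T)) : Prop :=
  (
      lambda ∘∘ rw mu S
      = lw S mu ∘∘ asc' S T T ∘∘ rw lambda T ∘∘ asc T S T ∘∘ lw T lambda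
          ∘∘ asc' T T S /\
      lambda ∘∘ rw eta S ∘∘ lu' S = lw S eta ∘∘ ru' S /\
      lw S mu ∘∘ asc' S T T ∘∘ rw lambda T ∘∘ asc T S T ∘∘ lw T sigma ∘∘ ru' T
      = lw S mu ∘∘ asc' S T T ∘∘ rw sigma T ∘∘ lu' T /\
      lw S mu ∘∘ asc' S T T ∘∘ rw nu T ∘∘ asc S S T ∘∘ lw S lambda
          ∘∘ asc' S T S ∘∘ rw lambda S
      = lw S mu ∘∘ asc' S T T ∘∘ rw lambda T ∘∘ asc T S T ∘∘ lw T nu
          ∘∘ asc' T S S /\
      lw S mu ∘∘ asc' S T T ∘∘ rw nu T ∘∘ asc S S T ∘∘ lw S nu
      = lw S mu ∘∘ asc' S T T ∘∘ rw nu T ∘∘ asc S S T ∘∘ lw S lambda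
          ∘∘ asc' S T S ∘∘ rw nu S ∘∘ asc S S S /\
      lw S mu ∘∘ asc' S T T ∘∘ rw nu T ∘∘ asc S S T ∘∘ lw S sigma = lw S eta /\
      lw S mu ∘∘ asc' S T T ∘∘ rw nu T ∘∘ asc S S T ∘∘ lw S lambda
          ∘∘ asc' S T S ∘∘ rw sigma S ∘∘ lu' S
      = lw S eta ∘∘ ru' S).

(* Mixed opwreath (zeta, delta, epsilon) on G around T : axioms (M1)-(M7).
   Words of length >= 3 are bracketed to the right: TGG = T(GG). *)
Definition is_mixed_opwreath (G : E) (zeta : Cell (G ** T) (T ** G))
  (delta : Cell G (T ** G ** G)) (epsilon : Cell G T) : Prop :=
  (
      zeta ∘∘ lw G mu
      = rw mu G ∘∘ asc T T G ∘∘ lw T zeta ∘∘ asc' T G T ∘∘ rw zeta T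
          ∘∘ asc G T T /\
      zeta ∘∘ lw G eta ∘∘ ru' G = rw eta G ∘∘ lu' G /\
      mu ∘∘ rw epsilon T = mu ∘∘ lw T epsilon ∘∘ zeta /\
      rw mu (G ** G) ∘∘ asc T T (G ** G) ∘∘ lw T (asc' T G G)
          ∘∘ lw T (rw zeta G) ∘∘ lw T (asc G T G) ∘∘ lw T (lw G zeta)
          ∘∘ lw T (asc' G G T) ∘∘ asc' T (G ** G) T ∘∘ rw delta T
      = rw mu (G ** G) ∘∘ asc T T (G ** G) ∘∘ lw T delta ∘∘ zeta /\
      rw mu (G ** G ** G) ∘∘ asc T T (G ** G ** G) ∘∘ lw T (lw T (asc' G G G))
          ∘∘ lw T (asc' T (G ** G) G) ∘∘ lw T (rw delta G) ∘∘ delta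
      = rw mu (G ** G ** G) ∘∘ asc T T (G ** G ** G)
          ∘∘ lw T (asc' T G (G ** G)) ∘∘ lw T (rw zeta (G ** G))
          ∘∘ lw T (asc G T (G ** G)) ∘∘ lw T (lw G delta) ∘∘ delta /\
      rw mu G ∘∘ asc T T G ∘∘ lw T (rw epsilon G) ∘∘ delta
      = rw eta G ∘∘ lu' G /\
      rw mu G ∘∘ asc T T G ∘∘ lw T zeta ∘∘ lw T (lw G epsilon) ∘∘ delta
      = rw eta G ∘∘ lu' G).

Variables (G S : E) (u : Cell I (S ** G)) (e : Cell (G ** S) I).

Definition mate_zeta (lambda : Cell (T ** S) (S ** T)) : Cell (G ** T) (T ** G) :=
  lu (T ** G) ∘∘ rw e (T ** G) ∘∘ asc G S (T ** G) ∘∘ lw G (asc' S T G)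
    ∘∘ lw G (rw lambda G) ∘∘ lw G (asc T S G) ∘∘ lw G (lw T u) ∘∘ lw G (ru' T).

Definition mate_delta (nu : Cell (S ** S) (S ** T)) : Cell G (T ** G ** G) :=
  lu (T ** G ** G) ∘∘ rw e (T ** G ** G) ∘∘ asc G S (T ** G ** G)
    ∘∘ lw G (asc' S T (G ** G)) ∘∘ lw G (rw nu (G ** G))
    ∘∘ lw G (asc S S (G ** G)) ∘∘ lw G (lw S (asc' S G G))
    ∘∘ lw G (lw S (rw u G)) ∘∘ lw G (lw S (lu' G)) ∘∘ lw G u ∘∘ ru' G.

Definition mate_epsilon (sigma : Cell I (S ** T)) : Cell G T :=
  lu T ∘∘ rw e T ∘∘ asc G S T ∘∘ lw G sigma ∘∘ ru' G.

Definition wreath_data : Type :=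
  (Cell (S ** S) (S ** T) * Cell I (S ** T) * Cell (T ** S) (S ** T))%type.
Definition opwreath_data : Type :=
  (Cell (G ** T) (T ** G) * Cell G (T ** G ** G) * Cell G T)%type.

Definition mate (w : wreath_data) : opwreath_data :=
  let: (nu, sigma, lambda) := w in
  (mate_zeta lambda, mate_delta nu, mate_epsilon sigma).

End Endo.

(* Main.v *)
From Pilot Require Import Defs.
From mathcomp Require Import ssreflect ssrfun ssrbool.
From Stdlib Require Import ProofIrrelevance.

Set Implicit Arguments.
Unset Strict Implicit.

Local Notation "f ** g" := (comp1 f g) (at level 35, right associativity).
Local Notation "b ∘∘ a" := (vcomp b a) (at level 50, left associativity).

Section Basic.
Variables (K : TwoCategory) (A : Obj K).
Local Notation E := (Hom A A).
Local Notation C := (@Cell K A A).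

Lemma ichg (f f' f'' g g' g'' : E) (x' : C f' f'') (x : C f f') (y' : C g' g'') (y : C g g') :
  hcomp (x' ∘∘ x) (y' ∘∘ y) = hcomp x' y' ∘∘ hcomp x y.
Proof. exact (Pilot.Defs.interchange x' x y' y). Qed.
Lemma hid (f g : E) : hcomp (id2 f) (id2 g) = id2 (f ** g).
Proof. exact: hcomp_id. Qed.

Lemma vA (f g h k : E) (x : C h k) (y : C g h) (z : C f g) :
  x ∘∘ (y ∘∘ z) = x ∘∘ y ∘∘ z.
Proof. exact: vcompA. Qed.
Lemma v1l (f g : E) (x : C f g) : id2 g ∘∘ x = x.
Proof. exact: vcomp1l. Qed.
Lemma v1r (f g : E) (x : C f g) : x ∘∘ id2 f = x.
Proof. exact: vcomp1r. Qed.

Lemma ctx2 (f g g' h k : E) (x : C g h) (y : C f g) (x' : C g' h) (y' : C f g')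
  (H : x ∘∘ y = x' ∘∘ y') (p : C h k) : p ∘∘ x ∘∘ y = p ∘∘ x' ∘∘ y'.
Proof. by rewrite -!vA H. Qed.
Lemma ctx2s (f g h k : E) (x : C g h) (y : C f g) (z : C f h)
  (H : x ∘∘ y = z) (p : C h k) : p ∘∘ x ∘∘ y = p ∘∘ z.
Proof. by rewrite -!vA H. Qed.
Lemma ctx1 (f g h k : E) (x : C g h) (z : C f g) (z' : C f h)
  (H : x ∘∘ z = z') (p : C h k) : p ∘∘ x ∘∘ z = p ∘∘ z'.
Proof. by rewrite -!vA H. Qed.

Lemma trc_cst (f f' g g' : E) (e1 : f = f') (e2 : g = g') (c : C f g) :
  trc C e1 e2 c = cst e2 ∘∘ c ∘∘ cst (esym e1).
Proof. case: _ / e1; case: _ / e2 => /=. by rewrite v1l v1r. Qed.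

Lemma cst_pi (f g : E) (e e' : f = g) : cst e = cst e'.
Proof. by rewrite (proof_irrelevance _ e e'). Qed.
Lemma cst_id (f : E) (e : f = f) : cst e = id2 f.
Proof. by rewrite (proof_irrelevance _ e erefl). Qed.
Lemma cst_comp (f g h : E) (e1 : f = g) (e2 : g = h) :
  cst e2 ∘∘ cst e1 = cst (etrans e1 e2).
Proof. case: _ / e2; case: _ / e1 => /=. by rewrite v1l. Qed.
Lemma cst_comp3 (f g h : E) (e1 : f = g) (e2 : g = h) (e : f = h) :
  cst e2 ∘∘ cst e1 = cst e.
Proof. rewrite cst_comp; exact: cst_pi. Qed.
Lemma cst_compx (f g h k : E) (e1 : f = g) (e2 : g = h) (e : f = h) (x : C k f) :
  cst e2 ∘∘ cst e1 ∘∘ x = cst e ∘∘ x.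
Proof. by rewrite (cst_comp3 _ _ e). Qed.

Lemma lw_comp (X f g h : E) (b : C g h) (a : C f g) :
  lw X (b ∘∘ a) = lw X b ∘∘ lw X a.
Proof. by rewrite /lw -ichg v1l. Qed.
Lemma rw_comp (X f g h : E) (b : C g h) (a : C f g) :
  rw (b ∘∘ a) X = rw b X ∘∘ rw a X.
Proof. by rewrite /rw -ichg v1l. Qed.
Lemma lw_id (X f : E) : lw X (id2 f) = id2 (X ** f).
Proof. exact: hid. Qed.
Lemma rw_id (X f : E) : rw (id2 f) X = id2 (f ** X).
Proof. exact: hid. Qed.
Lemma hcomp_lr (f f' g g' : E) (x : C f f') (y : C g g') :
  hcomp x y = rw x g' ∘∘ lw f y.
Proof. by rewrite /rw /lw -ichg v1l v1r. Qed.
Lemma hcomp_rl (f f' g g' : E) (x : C f f') (y : C g g') :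
  hcomp x y = lw f' y ∘∘ rw x g.
Proof. by rewrite /rw /lw -ichg v1l v1r. Qed.
Lemma rw_lw (f f' g g' : E) (x : C f f') (y : C g g') :
  rw x g' ∘∘ lw f y = lw f' y ∘∘ rw x g.
Proof. by rewrite -hcomp_lr hcomp_rl. Qed.
Lemma hcomp_cst (f f' g g' : E) (e1 : f = f') (e2 : g = g') (e : f ** g = f' ** g') :
  hcomp (cst e1) (cst e2) = cst e.
Proof. move: e; case: _ / e1; case: _ / e2 => e. by rewrite !cst_id hid. Qed.
Lemma lw_cst (X f g : E) (e : f = g) (e' : X ** f = X ** g) : lw X (cst e) = cst e'.
Proof. move: e'; case: _ / e => e'. by rewrite /lw !cst_id hid. Qed.
Lemma rw_cst (X f g : E) (e : f = g) (e' : f ** X = g ** X) : rw (cst e) X = cst e'.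
Proof. move: e'; case: _ / e => e'. by rewrite /rw !cst_id hid. Qed.

Lemma hcomp_id2_cst (X f g : E) (e : f = g) :
  hcomp (id2 X) (cst e) = cst (f_equal (comp1 X) e).
Proof. exact: lw_cst. Qed.
Lemma rw_cst' (X f g : E) (e : f = g) :
  rw (cst e) X = cst (f_equal (comp1^~ X) e).
Proof. exact: rw_cst. Qed.
Lemma lw_cst' (X f g : E) (e : f = g) :
  lw X (cst e) = cst (f_equal (comp1 X) e).
Proof. exact: lw_cst. Qed.
Lemma cst_compp (f g h k : E) (e1 : f = g) (e2 : g = h) (p : C h k) :
  p ∘∘ cst e2 ∘∘ cst e1 = p ∘∘ cst (etrans e1 e2).
Proof. by rewrite -vA cst_comp. Qed.

Lemma cst_cancel (f f' g g' : E) (p : g = g') (q : f' = f) (x y : C f g) :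
  cst p ∘∘ x ∘∘ cst q = cst p ∘∘ y ∘∘ cst q -> x = y.
Proof. destruct p, q => /=. by rewrite /cst /= !v1l !v1r. Qed.

Lemma hA (f f' g g' h h' : E) (x : C f f') (y : C g g') (z : C h h') :
  hcomp x (hcomp y z) = cst (esym (comp1A f' g' h')) ∘∘ hcomp (hcomp x y) z ∘∘ cst (comp1A f g h).
Proof.
have := hcompA x y z; rewrite trc_cst => <-.
rewrite !vA cst_comp3 ?v1l //; last first.
rewrite -!vA cst_comp3 ?v1r //.
Qed.

Lemma hA' (f f' g g' h h' : E) (x : C f f') (y : C g g') (z : C h h') :
  hcomp (hcomp x y) z = cst (comp1A f' g' h') ∘∘ hcomp x (hcomp y z) ∘∘ cst (esym (comp1A f g h)).
Proof.
by rewrite hA !vA cst_comp cst_id v1l -vA cst_comp cst_id v1r.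
Qed.

Lemma rw_I (f g : E) (x : C f g) :
  x = cst (comp1r g) ∘∘ rw x (id1 A) ∘∘ cst (esym (comp1r f)).
Proof. by have := hcomp1r x; rewrite trc_cst => ->. Qed.
Lemma lw_I (f g : E) (x : C f g) :
  x = cst (comp1l g) ∘∘ lw (id1 A) x ∘∘ cst (esym (comp1l f)).
Proof. by have := hcomp1l x; rewrite trc_cst => ->. Qed.

Lemma rw_transp (Y Y' V V' : E) (a : C Y Y') (e : V = V') :
  rw a V' = cst (f_equal (comp1 Y') e) ∘∘ rw a V ∘∘ cst (esym (f_equal (comp1 Y) e)).
Proof. case: _ / e => /=. by rewrite v1l v1r. Qed.

End Basic.

Section Transl.
Variables (K : TwoCategory) (A : Obj K).
Local Notation E := (Hom A A).
Local Notation C := (@Cell K A A).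

Definition Tr (X : E) (f : E -> E) : Prop := forall W, X ** W = f W.
Lemma Tr_gen (X : E) : Tr X (fun W => X ** W).
Proof. by []. Qed.
Lemma Tr_id : Tr (id1 A) (fun W => W).
Proof. move=> W; exact: comp1l. Qed.
Lemma Tr_comp (X Y : E) f g : Tr X f -> Tr Y g -> Tr (X ** Y) (fun W => f (g W)).
Proof. move=> hX hY W. by rewrite -comp1A hY hX. Qed.

Definition tr (X Y : E) f g (hX : Tr X f) (hY : Tr Y g) (a : C X Y) (W : E)
  : C (f W) (g W) := cst (hY W) ∘∘ rw a W ∘∘ cst (esym (hX W)).
Definition act (X : E) f (hX : Tr X f) (W W' : E) (c : C W W') : C (f W) (f W') :=
  cst (hX W') ∘∘ lw X c ∘∘ cst (esym (hX W)).

Lemma cst_inv (f g : E) (p : f = g) (q : g = f) : cst p ∘∘ cst q = id2 g.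
Proof. by rewrite cst_comp cst_id. Qed.
Lemma cst_invx (f g h : E) (p : f = g) (q : g = f) (x : C h g) : cst p ∘∘ cst q ∘∘ x = x.
Proof. by rewrite cst_inv v1l. Qed.
Lemma cst_invy (f g h k : E) (p : f = g) (q : g = f) (y : C g k) (x : C h g) :
  y ∘∘ cst p ∘∘ cst q ∘∘ x = y ∘∘ x.
Proof. by rewrite -(vA y) cst_inv v1r. Qed.

Lemma tr_nat X Y f g (hX : Tr X f) (hY : Tr Y g) (a : C X Y) W W' (c : C W W') :
  tr hX hY a W' ∘∘ act hX c = act hY c ∘∘ tr hX hY a W.
Proof.
rewrite /tr /act !vA !cst_invy.
by rewrite (ctx2 (rw_lw _ _)).
Qed.

Lemma act_gen X (p : Tr X (fun W => X ** W)) W W' (c : C W W') : act p c = lw X c.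
Proof. by rewrite /act !cst_id v1l v1r. Qed.
Lemma act_id (p : Tr (id1 A) (fun W => W)) W W' (c : C W W') : act p c = c.
Proof. rewrite /act [RHS](lw_I c). congr (_ ∘∘ _ ∘∘ _); exact: cst_pi. Qed.
Lemma act_comp X Y f g (p : Tr X f) (q : Tr Y g) (r : Tr (X ** Y) (fun W => f (g W)))
  W W' (c : C W W') : act r c = act p (act q c).
Proof.
rewrite /act !lw_comp /lw hA hid !hcomp_id2_cst !vA !cst_compp !cst_comp.
congr (_ ∘∘ _ ∘∘ _); exact: cst_pi.
Qed.

Definition R (X Y : E) f g (a : C X Y) (phi : forall W, C (f W) (g W)) : Prop :=
  exists (hX : Tr X f) (hY : Tr Y g), forall W, phi W = tr hX hY a W.

Lemma R_base X Y f g (hX : Tr X f) (hY : Tr Y g) (a : C X Y) : R a (tr hX hY a).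
Proof. by exists hX, hY. Qed.

Lemma R_ext X Y f g (a : C X Y) (phi psi : forall W, C (f W) (g W)) :
  R a phi -> (forall W, phi W = psi W) -> R a psi.
Proof. move=> [hX [hY H]] E'; exists hX, hY => W; by rewrite -E'. Qed.

Lemma R_fun X Y f g (a : C X Y) (phi psi : forall W, C (f W) (g W)) :
  R a phi -> R a psi -> forall W, phi W = psi W.
Proof.
move=> [hX [hY H]] [hX' [hY' H']] W; rewrite H H'.
by rewrite (proof_irrelevance _ hX hX') (proof_irrelevance _ hY hY').
Qed.

Lemma R_inj X Y f g (a b : C X Y) (phi : forall W, C (f W) (g W)) :
  R a phi -> R b phi -> a = b.
Proof.
move=> [hX [hY H]] [hX' [hY' H']].
have := H (id1 A); rewrite H' /tr.
rewrite (proof_irrelevance _ hX hX') (proof_irrelevance _ hY hY') => /cst_cancel E'.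
by rewrite (rw_I a) (rw_I b) E'.
Qed.

Lemma R_nat X Y f g (a : C X Y) (phi : forall W, C (f W) (g W)) :
  R a phi -> forall (hX : Tr X f) (hY : Tr Y g) W W' (c : C W W'),
  phi W' ∘∘ act hX c = act hY c ∘∘ phi W.
Proof.
move=> [hX0 [hY0 H]] hX hY W W' c; rewrite !H.
rewrite (proof_irrelevance _ hX0 hX) (proof_irrelevance _ hY0 hY).
exact: tr_nat.
Qed.

Lemma R_vcomp X Y Z f g k (a : C X Y) (b : C Y Z)
  (phi : forall W, C (f W) (g W)) (psi : forall W, C (g W) (k W)) :
  R a phi -> R b psi -> R (b ∘∘ a) (fun W => psi W ∘∘ phi W).
Proof.
move=> [hX [hY H]] [hY' [hZ H']]; exists hX, hZ => W.
rewrite H H' /tr rw_comp !vA cst_invy.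
done.
Qed.

Lemma R_lw (X Y Y' : E) f g (a : C Y Y') (phi : forall W, C (f W) (g W)) :
  R a phi -> R (lw X a) (fun W => lw X (phi W)).
Proof.
move=> [hY [hY' H]].
exists (Tr_comp (Tr_gen X) hY), (Tr_comp (Tr_gen X) hY') => W.
rewrite H /tr !lw_comp /lw /rw hA !hcomp_id2_cst !vA !cst_compp !cst_comp.
congr (_ ∘∘ _ ∘∘ _); exact: cst_pi.
Qed.

Lemma R_rw (Y Y' Z : E) f g fz (hZ : Tr Z fz) (a : C Y Y') (phi : forall W, C (f W) (g W)) :
  R a phi -> R (rw a Z) (fun W => phi (fz W)).
Proof.
move=> [hY [hY' H]].
exists (Tr_comp hY hZ), (Tr_comp hY' hZ) => W.
rewrite H /tr (rw_transp a (hZ W)) /rw hA' hid !vA !cst_compp !cst_comp.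
congr (_ ∘∘ _ ∘∘ _); exact: cst_pi.
Qed.

Lemma R_cst X Y f (hX : Tr X f) (hY : Tr Y f) (e : X = Y) :
  R (cst e) (fun W => id2 (f W)).
Proof.
exists hX, hY => W; rewrite /tr rw_cst' !cst_comp; by rewrite cst_id.
Qed.

Lemma R_id2 X f (hX : Tr X f) : R (id2 X) (fun W => id2 (f W)).
Proof. exact: (R_cst hX hX erefl). Qed.

Lemma act_Tr_comp X Y f g (p : Tr X f) (q : Tr Y g) W W' (c : C W W') :
  act (Tr_comp p q) c = act p (act q c).
Proof. exact: (act_comp p q (Tr_comp p q) c). Qed.

Lemma R_iff X Y f g (a b : C X Y) (phi psi : forall W, C (f W) (g W)) :
  R a phi -> R b psi -> (a = b <-> forall W, phi W = psi W).
Proof.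
move=> Ra Rb; split=> [E' W|H].
- by apply: R_fun Ra _ W; rewrite E'.
- apply: (R_inj Ra); exact: (R_ext Rb (fun W => esym (H W))).
Qed.

End Transl.

Lemma iff_and7 (P1 P2 P3 P4 P5 P6 P7 Q1 Q2 Q3 Q4 Q5 Q6 Q7 : Prop) :
  (P1 <-> Q1) -> (P2 <-> Q2) -> (P3 <-> Q3) -> (P4 <-> Q4) -> (P5 <-> Q5) ->
  (P6 <-> Q6) -> (P7 <-> Q7) ->
  (P1 /\ P2 /\ P3 /\ P4 /\ P5 /\ P6 /\ P7) <-> (Q1 /\ Q2 /\ Q3 /\ Q4 /\ Q5 /\ Q6 /\ Q7).
Proof. tauto. Qed.


Section FamLemmas.
Variables (K : TwoCategory) (A : Obj K).
Local Notation E := (Hom A A).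
Local Notation C := (@Cell K A A).
Variables (T S G : E).
Variables (uu : forall W, C W (S ** (G ** W))) (ee : forall W, C (G ** (S ** W)) W).
Hypothesis nat_u : forall W W' (c : C W W'), uu W' ∘∘ c = lw S (lw G c) ∘∘ uu W.
Hypothesis nat_e : forall W W' (c : C W W'), ee W' ∘∘ lw G (lw S c) = c ∘∘ ee W.
Hypothesis tri1 : forall W, ee (G ** W) ∘∘ lw G (uu W) = id2 _.
Hypothesis tri2 : forall W, lw S (ee W) ∘∘ uu (S ** W) = id2 _.

Definition tp P Q (y : C (G ** P) Q) : C P (S ** Q) := lw S y ∘∘ uu P.

Lemma tp_inv P Q (y : C (G ** P) Q) : ee Q ∘∘ lw G (tp y) = y.
Proof. by rewrite /tp lw_comp vA nat_e -vA tri1 v1r. Qed.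
Lemma tp_inj P Q (y y' : C (G ** P) Q) : tp y = tp y' -> y = y'.
Proof. by move=> H; rewrite -(tp_inv y) H tp_inv. Qed.
Lemma mateL_inv P Q (x : C P (S ** Q)) : tp (ee Q ∘∘ lw G x) = x.
Proof. by rewrite /tp lw_comp -vA -nat_u vA tri2 v1l. Qed.

Section Rho.
Variables (f g : E -> E) (af : forall W W', C W W' -> C (f W) (f W'))
  (ag : forall W W', C W W' -> C (g W) (g W')).
Hypothesis af_comp : forall W1 W2 W3 (b : C W2 W3) (a : C W1 W2), af (b ∘∘ a) = af b ∘∘ af a.
Hypothesis af_id : forall W, af (id2 W) = id2 _.
Definition rho (phi : forall W, C (f (S ** W)) (g W)) : forall W, C (f W) (g (G ** W)) :=
  fun W => phi (G ** W) ∘∘ af (uu W).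
Definition natural (phi : forall W, C (f (S ** W)) (g W)) :=
  forall W W' (c : C W W'), phi W' ∘∘ af (lw S c) = ag c ∘∘ phi W.
Lemma rho_inv phi : natural phi -> forall W, ag (ee W) ∘∘ rho phi (S ** W) = phi W.
Proof. by move=> N W; rewrite /rho vA -N -vA -af_comp tri2 af_id v1r. Qed.
Lemma rho_inj phi psi : natural phi -> natural psi ->
  (forall W, rho phi W = rho psi W) -> forall W, phi W = psi W.
Proof. by move=> N1 N2 H W; rewrite -(rho_inv N1) -(rho_inv N2) H. Qed.
Lemma rho_nat phi : natural phi -> forall W W' (c : C W W'),
  rho phi W' ∘∘ af c = ag (lw G c) ∘∘ rho phi W.
Proof. by move=> N W W' c; rewrite /rho -vA -af_comp nat_u af_comp vA N -vA. Qed.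
End Rho.

Variables (m : forall W, C (T ** (T ** W)) (T ** W)) (h : forall W, C W (T ** W))
  (n : forall W, C (S ** (S ** W)) (S ** (T ** W))) (s : forall W, C W (S ** (T ** W)))
  (l : forall W, C (T ** (S ** W)) (S ** (T ** W))).
Hypothesis nat_m : forall W W' (c : C W W'), m W' ∘∘ lw T (lw T c) = lw T c ∘∘ m W.
Hypothesis nat_h : forall W W' (c : C W W'), h W' ∘∘ c = lw T c ∘∘ h W.
Hypothesis nat_n : forall W W' (c : C W W'), n W' ∘∘ lw S (lw S c) = lw S (lw T c) ∘∘ n W.
Hypothesis nat_s : forall W W' (c : C W W'), s W' ∘∘ c = lw S (lw T c) ∘∘ s W.
Hypothesis nat_l : forall W W' (c : C W W'), l W' ∘∘ lw T (lw S c) = lw S (lw T c) ∘∘ l W.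

Variables (z : forall W, C (G ** (T ** W)) (T ** (G ** W)))
  (d : forall W, C (G ** W) (T ** (G ** (G ** W)))) (ep : forall W, C (G ** W) (T ** W)).
Hypothesis Kz : forall W, lw S (z W) ∘∘ uu (T ** W) = l (G ** W) ∘∘ lw T (uu W).
Hypothesis Kd : forall W, lw S (d W) ∘∘ uu W = n (G ** (G ** W)) ∘∘ lw S (uu (G ** W)) ∘∘ uu W.
Hypothesis Ke : forall W, lw S (ep W) ∘∘ uu W = s W.

Lemma S1L W : tp (z W ∘∘ lw G (m W)) = l (G ** W) ∘∘ m (S ** (G ** W)) ∘∘ lw T (lw T (uu W)).
Proof.
rewrite /tp !lw_comp -vA -nat_u vA Kz.
by rewrite -!vA nat_m.
Qed.

Lemma S1R W : tp (m (G ** W) ∘∘ lw T (z W) ∘∘ z (T ** W)) =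
  lw S (m (G ** W)) ∘∘ l (T ** (G ** W)) ∘∘ lw T (l (G ** W)) ∘∘ lw T (lw T (uu W)).
Proof.
rewrite /tp !lw_comp (ctx2s (Kz _)) !vA.
rewrite (ctx2 (esym (nat_l _))).
rewrite (ctx2s (esym (lw_comp _ _ _))) Kz.
by rewrite lw_comp !vA.
Qed.

Lemma S2L W : tp (z W ∘∘ lw G (h W)) = l (G ** W) ∘∘ h (S ** (G ** W)) ∘∘ uu W.
Proof. by rewrite /tp !lw_comp -vA -nat_u vA Kz -!vA nat_h. Qed.

Lemma S3a W : tp (m W ∘∘ ep (T ** W)) = lw S (m W) ∘∘ s (T ** W).
Proof. by rewrite /tp lw_comp -vA Ke. Qed.

Lemma S3b W : tp (m W ∘∘ lw T (ep W) ∘∘ z W) = lw S (m W) ∘∘ l (T ** W) ∘∘ lw T (s W).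
Proof.
rewrite /tp !lw_comp (ctx2s (Kz _)) !vA (ctx2 (esym (nat_l _))).
by rewrite (ctx2s (esym (lw_comp _ _ _))) Ke.
Qed.

Lemma S4R W : tp (m (G ** (G ** W)) ∘∘ lw T (d W) ∘∘ z W) =
  lw S (m (G ** (G ** W))) ∘∘ l (T ** (G ** (G ** W))) ∘∘ lw T (n (G ** (G ** W)))
  ∘∘ lw T (lw S (uu (G ** W))) ∘∘ lw T (uu W).
Proof.
rewrite /tp !lw_comp (ctx2s (Kz _)) !vA (ctx2 (esym (nat_l _))).
by rewrite (ctx2s (esym (lw_comp _ _ _))) Kd !lw_comp !vA.
Qed.

Lemma S4L W : tp (m (G ** (G ** W)) ∘∘ lw T (z (G ** W)) ∘∘ lw T (lw G (z W)) ∘∘ d (T ** W)) =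
  lw S (m (G ** (G ** W))) ∘∘ n (T ** (G ** (G ** W))) ∘∘ lw S (l (G ** (G ** W)))
  ∘∘ l (S ** (G ** (G ** W))) ∘∘ lw T (lw S (uu (G ** W))) ∘∘ lw T (uu W).
Proof.
rewrite /tp !lw_comp (ctx2s (Kd _)) !vA.
rewrite (ctx2 (esym (nat_n (lw G (z W))))).
rewrite (ctx2 (esym (nat_n (z (G ** W))))).
rewrite (ctx2s (esym (lw_comp S (lw S (lw G (z W))) (uu _)))) -(nat_u (z W)).
rewrite (lw_comp S (uu _) (z W)) !vA (ctx2s (Kz W)) !vA.
rewrite (ctx2s (esym (lw_comp S (lw S (z (G ** W))) (uu _)))) Kz !lw_comp !vA.
by rewrite (ctx2 (nat_l _)).
Qed.

Lemma S5L W : tp (m (G ** (G ** (G ** W))) ∘∘ lw T (d (G ** W)) ∘∘ d W) =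
  lw S (m (G ** (G ** (G ** W)))) ∘∘ n (T ** (G ** (G ** (G ** W))))
  ∘∘ lw S (n (G ** (G ** (G ** W)))) ∘∘ lw S (lw S (uu (G ** (G ** W))))
  ∘∘ lw S (uu (G ** W)) ∘∘ uu W.
Proof.
rewrite /tp !lw_comp (ctx2s (Kd _)) !vA.
rewrite (ctx2 (esym (nat_n (d (G ** W))))).
by rewrite (ctx2s (esym (lw_comp S (lw S (d _)) (uu _)))) Kd !lw_comp !vA.
Qed.

Lemma S5R W : tp (m (G ** (G ** (G ** W))) ∘∘ lw T (z (G ** (G ** W))) ∘∘ lw T (lw G (d W))
    ∘∘ d W) =
  lw S (m (G ** (G ** (G ** W)))) ∘∘ n (T ** (G ** (G ** (G ** W))))
  ∘∘ lw S (l (G ** (G ** (G ** W)))) ∘∘ n (S ** (G ** (G ** (G ** W))))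
  ∘∘ lw S (lw S (uu (G ** (G ** W)))) ∘∘ lw S (uu (G ** W)) ∘∘ uu W.
Proof.
rewrite /tp !lw_comp (ctx2s (Kd _)) !vA.
rewrite (ctx2 (esym (nat_n (lw G (d W))))).
rewrite (ctx2 (esym (nat_n (z (G ** (G ** W)))))).
rewrite (ctx2s (esym (lw_comp S (lw S (lw G (d W))) (uu _)))) -(nat_u (d W)).
rewrite (lw_comp S (uu _) (d W)) !vA.
rewrite (ctx2s (esym (lw_comp S (lw S (z (G ** (G ** W)))) (uu _)))) Kz !lw_comp !vA.
rewrite (ctx2s (Kd W)) !vA.
by rewrite (ctx2 (nat_n (uu _))).
Qed.

Lemma S6L W : tp (m (G ** W) ∘∘ lw T (ep (G ** W)) ∘∘ d W) =
  lw S (m (G ** W)) ∘∘ n (T ** (G ** W)) ∘∘ lw S (s (G ** W)) ∘∘ uu W.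
Proof.
rewrite /tp !lw_comp (ctx2s (Kd _)) !vA.
rewrite (ctx2 (esym (nat_n (ep (G ** W))))).
by rewrite (ctx2s (esym (lw_comp S (lw S (ep _)) (uu _)))) Ke.
Qed.

Lemma S7L W : tp (m (G ** W) ∘∘ lw T (z W) ∘∘ lw T (lw G (ep W)) ∘∘ d W) =
  lw S (m (G ** W)) ∘∘ n (T ** (G ** W)) ∘∘ lw S (l (G ** W)) ∘∘ s (S ** (G ** W)) ∘∘ uu W.
Proof.
rewrite /tp !lw_comp (ctx2s (Kd _)) !vA.
rewrite (ctx2 (esym (nat_n (lw G (ep W))))).
rewrite (ctx2 (esym (nat_n (z W)))).
rewrite (ctx2s (esym (lw_comp S (lw S (lw G (ep W))) (uu _)))) -(nat_u (ep W)).
rewrite (lw_comp S (uu _) (ep W)) !vA.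
rewrite (ctx2s (esym (lw_comp S (lw S (z W)) (uu _)))) Kz !lw_comp !vA.
rewrite (ctx2s (Ke W)).
by rewrite (ctx2 (nat_s (uu W))).
Qed.

Lemma c0 W1 W2 W3 (b : C W2 W3) (a : C W1 W2) :
  (fun W W' (c : C W W') => c) _ _ (b ∘∘ a) = (fun W W' (c : C W W') => c) _ _ b ∘∘ (fun W W' (c : C W W') => c) _ _ a.
Proof. by []. Qed.
Lemma c1 X W1 W2 W3 (b : C W2 W3) (a : C W1 W2) :
  lw X (b ∘∘ a) = lw X b ∘∘ lw X a.
Proof. exact: lw_comp. Qed.
Lemma c2 X Y W1 W2 W3 (b : C W2 W3) (a : C W1 W2) :
  lw X (lw Y (b ∘∘ a)) = lw X (lw Y b) ∘∘ lw X (lw Y a).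
Proof. by rewrite !lw_comp. Qed.

Lemma eq1
  (NL : natural (fun W W' (c : C W W') => lw T (lw T c)) (fun W W' (c : C W W') => lw S (lw T c))
          (fun W => l W ∘∘ m (S ** W)))
  (NR : natural (fun W W' (c : C W W') => lw T (lw T c)) (fun W W' (c : C W W') => lw S (lw T c))
          (fun W => lw S (m W) ∘∘ l (T ** W) ∘∘ lw T (l W))) :
  (forall W, l W ∘∘ m (S ** W) = lw S (m W) ∘∘ l (T ** W) ∘∘ lw T (l W)) <->
  (forall W, z W ∘∘ lw G (m W) = m (G ** W) ∘∘ lw T (z W) ∘∘ z (T ** W)).
Proof.
split=> H W.
- apply: tp_inj. by rewrite S1L S1R H.
- apply: (rho_inj _ _ NL NR) => [?????|?|{}W]; rewrite ?lw_comp ?lw_id //.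
  rewrite /rho -S1L -S1R. by rewrite H.
Qed.

Lemma eq2
  (NL : natural (fun W W' (c : C W W') => c) (fun W W' (c : C W W') => lw S (lw T c))
          (fun W => l W ∘∘ h (S ** W)))
  (NR : natural (fun W W' (c : C W W') => c) (fun W W' (c : C W W') => lw S (lw T c))
          (fun W => lw S (h W))) :
  (forall W, l W ∘∘ h (S ** W) = lw S (h W)) <->
  (forall W, z W ∘∘ lw G (h W) = h (G ** W)).
Proof.
split=> H W.
- apply: tp_inj. by rewrite S2L H.
- apply: (rho_inj _ _ NL NR) => [?????|?|{}W] //.
  rewrite /rho -S2L. by rewrite H.
Qed.

Lemma eq3 :
  (forall W, lw S (m W) ∘∘ l (T ** W) ∘∘ lw T (s W) = lw S (m W) ∘∘ s (T ** W)) <->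
  (forall W, m W ∘∘ ep (T ** W) = m W ∘∘ lw T (ep W) ∘∘ z W).
Proof.
split=> H W.
- apply: tp_inj. by rewrite S3a S3b H.
- by rewrite -S3a -S3b H.
Qed.

Lemma eq4
  (NL : natural (fun W W' (c : C W W') => lw T (lw S c)) (fun W W' (c : C W W') => lw S (lw T c))
          (fun W => lw S (m W) ∘∘ n (T ** W) ∘∘ lw S (l W) ∘∘ l (S ** W)))
  (NR : natural (fun W W' (c : C W W') => lw T (lw S c)) (fun W W' (c : C W W') => lw S (lw T c))
          (fun W => lw S (m W) ∘∘ l (T ** W) ∘∘ lw T (n W))) :
  (forall W, lw S (m W) ∘∘ n (T ** W) ∘∘ lw S (l W) ∘∘ l (S ** W) =
             lw S (m W) ∘∘ l (T ** W) ∘∘ lw T (n W)) <->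
  (forall W, m (G ** (G ** W)) ∘∘ lw T (z (G ** W)) ∘∘ lw T (lw G (z W)) ∘∘ d (T ** W) =
             m (G ** (G ** W)) ∘∘ lw T (d W) ∘∘ z W).
Proof.
split=> H W.
- apply: tp_inj. by rewrite S4L S4R H.
- have NL' : natural (fun W W' (c : C W W') => lw T c)
     (fun W W' (c : C W W') => lw S (lw T (lw G c)))
     (rho (fun W W' (c : C W W') => lw T (lw S c)) (fun W => lw S (m W) ∘∘ n (T ** W) ∘∘ lw S (l W) ∘∘ l (S ** W))).
    move=> ???; exact: (rho_nat (c2 T S) NL).
  have NR' : natural (fun W W' (c : C W W') => lw T c)
     (fun W W' (c : C W W') => lw S (lw T (lw G c)))
     (rho (fun W W' (c : C W W') => lw T (lw S c)) (fun W => lw S (m W) ∘∘ l (T ** W) ∘∘ lw T (n W))).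
    move=> ???; exact: (rho_nat (c2 T S) NR).
  apply: (rho_inj _ _ NL NR) => [?????|?|{}W]; rewrite ?lw_comp ?lw_id //.
  apply: (rho_inj _ _ NL' NR') => [?????|?|{}W]; rewrite ?lw_comp ?lw_id //.
  rewrite /rho -S4L -S4R. by rewrite H.
Qed.

Lemma eq5
  (NL : natural (fun W W' (c : C W W') => lw S (lw S c)) (fun W W' (c : C W W') => lw S (lw T c))
          (fun W => lw S (m W) ∘∘ n (T ** W) ∘∘ lw S (n W)))
  (NR : natural (fun W W' (c : C W W') => lw S (lw S c)) (fun W W' (c : C W W') => lw S (lw T c))
          (fun W => lw S (m W) ∘∘ n (T ** W) ∘∘ lw S (l W) ∘∘ n (S ** W))) :
  (forall W, lw S (m W) ∘∘ n (T ** W) ∘∘ lw S (n W) =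
             lw S (m W) ∘∘ n (T ** W) ∘∘ lw S (l W) ∘∘ n (S ** W)) <->
  (forall W, m (G ** (G ** (G ** W))) ∘∘ lw T (d (G ** W)) ∘∘ d W =
             m (G ** (G ** (G ** W))) ∘∘ lw T (z (G ** (G ** W))) ∘∘ lw T (lw G (d W)) ∘∘ d W).
Proof.
split=> H W.
- apply: tp_inj. by rewrite S5L S5R H.
- have NL' : natural (fun W W' (c : C W W') => lw S c)
     (fun W W' (c : C W W') => lw S (lw T (lw G c)))
     (rho (fun W W' (c : C W W') => lw S (lw S c)) (fun W => lw S (m W) ∘∘ n (T ** W) ∘∘ lw S (n W))).
    move=> ???; exact: (rho_nat (c2 S S) NL).
  have NR' : natural (fun W W' (c : C W W') => lw S c)
     (fun W W' (c : C W W') => lw S (lw T (lw G c)))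
     (rho (fun W W' (c : C W W') => lw S (lw S c)) (fun W => lw S (m W) ∘∘ n (T ** W) ∘∘ lw S (l W) ∘∘ n (S ** W))).
    move=> ???; exact: (rho_nat (c2 S S) NR).
  have NL'' : natural (fun W W' (c : C W W') => c)
     (fun W W' (c : C W W') => lw S (lw T (lw G (lw G c))))
     (rho (fun W W' (c : C W W') => lw S c) (rho (fun W W' (c : C W W') => lw S (lw S c)) (fun W => lw S (m W) ∘∘ n (T ** W) ∘∘ lw S (n W)))).
    move=> ???; exact: (rho_nat (c1 S) NL').
  have NR'' : natural (fun W W' (c : C W W') => c)
     (fun W W' (c : C W W') => lw S (lw T (lw G (lw G c))))
     (rho (fun W W' (c : C W W') => lw S c) (rho (fun W W' (c : C W W') => lw S (lw S c)) (fun W => lw S (m W) ∘∘ n (T ** W) ∘∘ lw S (l W) ∘∘ n (S ** W)))).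
    move=> ???; exact: (rho_nat (c1 S) NR').
  apply: (rho_inj _ _ NL NR) => [?????|?|{}W]; rewrite ?lw_comp ?lw_id //.
  apply: (rho_inj _ _ NL' NR') => [?????|?|{}W]; rewrite ?lw_comp ?lw_id //.
  apply: (rho_inj _ _ NL'' NR'') => [?????|?|{}W] //.
  rewrite /rho -S5L -S5R. by rewrite H.
Qed.

Lemma eq6
  (NL : natural (fun W W' (c : C W W') => c) (fun W W' (c : C W W') => lw S (lw T c))
          (fun W => lw S (m W) ∘∘ n (T ** W) ∘∘ lw S (s W)))
  (NR : natural (fun W W' (c : C W W') => c) (fun W W' (c : C W W') => lw S (lw T c))
          (fun W => lw S (h W))) :
  (forall W, lw S (m W) ∘∘ n (T ** W) ∘∘ lw S (s W) = lw S (h W)) <->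
  (forall W, m (G ** W) ∘∘ lw T (ep (G ** W)) ∘∘ d W = h (G ** W)).
Proof.
split=> H W.
- apply: tp_inj. by rewrite S6L H.
- apply: (rho_inj _ _ NL NR) => [?????|?|{}W] //.
  rewrite /rho -S6L. by rewrite H.
Qed.

Lemma eq7
  (NL : natural (fun W W' (c : C W W') => c) (fun W W' (c : C W W') => lw S (lw T c))
          (fun W => lw S (m W) ∘∘ n (T ** W) ∘∘ lw S (l W) ∘∘ s (S ** W)))
  (NR : natural (fun W W' (c : C W W') => c) (fun W W' (c : C W W') => lw S (lw T c))
          (fun W => lw S (h W))) :
  (forall W, lw S (m W) ∘∘ n (T ** W) ∘∘ lw S (l W) ∘∘ s (S ** W) = lw S (h W)) <->
  (forall W, m (G ** W) ∘∘ lw T (z W) ∘∘ lw T (lw G (ep W)) ∘∘ d W = h (G ** W)).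
Proof.
split=> H W.
- apply: tp_inj. by rewrite S7L H.
- apply: (rho_inj _ _ NL NR) => [?????|?|{}W] //.
  rewrite /rho -S7L. by rewrite H.
Qed.

Lemma Inv_l W : lw S (lw T (ee W)) ∘∘ lw S (z (S ** W)) ∘∘ uu (T ** (S ** W)) = l W.
Proof.
rewrite (ctx2s (Kz _)) vA -(nat_l (ee W)) -vA -lw_comp tri2 lw_id v1r //.
Qed.

Lemma Inv_n W : lw S (lw T (ee W)) ∘∘ lw S (lw T (lw G (ee (S ** W))))
   ∘∘ lw S (d (S ** (S ** W))) ∘∘ uu (S ** (S ** W)) = n W.
Proof.
rewrite (ctx2s (Kd _)) !vA.
rewrite (ctx2 (esym (nat_n (lw G (ee (S ** W)))))).
rewrite -(nat_n (ee W)).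
rewrite (ctx2s (esym (lw_comp S (lw S (lw G (ee (S ** W)))) (uu _)))) -(nat_u (ee (S ** W))).
rewrite (lw_comp S (uu _) (ee _)) !vA.
rewrite (ctx2s (esym (lw_comp S (lw S (ee W)) (uu _)))) tri2 lw_id v1r.
by rewrite (ctx2s (tri2 _)) v1r.
Qed.

End FamLemmas.

Section InvLemmas.
Variables (K : TwoCategory) (A : Obj K).
Local Notation E := (Hom A A).
Local Notation C := (@Cell K A A).
Variables (T S G : E).
Variables (uu : forall W, C W (S ** (G ** W))) (ee : forall W, C (G ** (S ** W)) W).
Hypothesis nat_u : forall W W' (c : C W W'), uu W' ∘∘ c = lw S (lw G c) ∘∘ uu W.
Hypothesis nat_e : forall W W' (c : C W W'), ee W' ∘∘ lw G (lw S c) = c ∘∘ ee W.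
Hypothesis tri1 : forall W, ee (G ** W) ∘∘ lw G (uu W) = id2 _.
Hypothesis tri2 : forall W, lw S (ee W) ∘∘ uu (S ** W) = id2 _.
Variables (z : forall W, C (G ** (T ** W)) (T ** (G ** W)))
  (d : forall W, C (G ** W) (T ** (G ** (G ** W)))).
Hypothesis nat_z : forall W W' (c : C W W'), z W' ∘∘ lw G (lw T c) = lw T (lw G c) ∘∘ z W.
Hypothesis nat_d : forall W W' (c : C W W'), d W' ∘∘ lw G c = lw T (lw G (lw G c)) ∘∘ d W.

Definition linv W : C (T ** (S ** W)) (S ** (T ** W)) :=
  lw S (lw T (ee W)) ∘∘ lw S (z (S ** W)) ∘∘ uu (T ** (S ** W)).
Definition ninv W : C (S ** (S ** W)) (S ** (T ** W)) :=
  lw S (lw T (ee W)) ∘∘ lw S (lw T (lw G (ee (S ** W))))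
   ∘∘ lw S (d (S ** (S ** W))) ∘∘ uu (S ** (S ** W)).

Lemma Inv_z W : ee (T ** (G ** W)) ∘∘ lw G (linv (G ** W)) ∘∘ lw G (lw T (uu W)) = z W.
Proof.
rewrite /linv !lw_comp !vA nat_e (ctx2 (nat_e _)) (ctx2s (tri1 _)) v1r.
by rewrite (ctx2 (nat_z _)) -lw_comp tri1 lw_id v1l.
Qed.

Lemma Inv_d W : ee (T ** (G ** (G ** W))) ∘∘ lw G (ninv (G ** (G ** W)))
  ∘∘ lw G (lw S (uu (G ** W))) ∘∘ lw G (uu W) = d W.
Proof.
rewrite /ninv !lw_comp !vA nat_e (ctx2 (nat_e _)) (ctx2 (nat_e _)) (ctx2s (tri1 _)) v1r.
rewrite (ctx2 (nat_d _)) (ctx2 (nat_d _)).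
rewrite (ctx2s (esym (lw_comp T (lw G (ee _)) (lw G (lw G (lw S (uu _))))))).
rewrite -(lw_comp G (ee _)) nat_e lw_comp lw_comp !vA.
rewrite -(lw_comp T (ee _)) tri1 lw_id v1l.
by rewrite -!lw_comp tri1 !lw_id v1l.
Qed.

End InvLemmas.


Ltac trT X :=
  lazymatch X with
  | comp1 ?a ?b => let p := trT a in let q := trT b in constr:(Tr_comp p q)
  | @id1 ?K ?A => constr:(@Tr_id K A)
  | _ => constr:(Tr_gen X)
  end.

Ltac mkcst a e :=
  let t := type of a in
  lazymatch t with @Cell _ _ _ ?X ?Y =>
    let h1 := trT X in let h2 := trT Y in constr:(R_cst h1 h2 e) end.

Ltac trR a :=
  lazymatch a with
  | vcomp ?b ?c => let p := trR c in let q := trR b in constr:(R_vcomp p q)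
  | lw ?X ?c => let p := trR c in constr:(R_lw X p)
  | rw ?c ?Z => let p := trR c in let hZ := trT Z in constr:(R_rw hZ p)
  | asc ?X ?Y ?Z => mkcst a (comp1A X Y Z)
  | asc' ?X ?Y ?Z => mkcst a (esym (comp1A X Y Z))
  | lu ?X => mkcst a (comp1l X)
  | lu' ?X => mkcst a (esym (comp1l X))
  | ru ?X => mkcst a (comp1r X)
  | ru' ?X => mkcst a (esym (comp1r X))
  | id2 ?X => let h := trT X in constr:(R_id2 h)
  | _ => let t := type of a in
         lazymatch t with @Cell _ _ _ ?X ?Y =>
           let h1 := trT X in let h2 := trT Y in constr:(R_base h1 h2 a) end
  end.

Ltac clean := cbv beta; rewrite ?lw_id ?rw_id ?v1l ?v1r.

Ltac trans_to :=
  lazymatch goal with |- R ?a _ =>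
    let a' := eval cbv beta delta [mate_zeta mate_delta mate_epsilon] in a in
    let p := trR a' in
    apply: (R_ext p); move=> ?; clean; reflexivity
  end.

Ltac act_rw h :=
  lazymatch h with
  | Tr_comp ?p ?q => try rewrite (act_comp p q); act_rw p; act_rw q
  | _ => idtac
  end.

Ltac natR RL :=
  lazymatch type of RL with @R _ _ ?X ?Y _ _ _ _ =>
    let hX := trT X in let hY := trT Y in
    rewrite /natural => ? ? c; have := R_nat RL hX hY c;
    act_rw hX; act_rw hY; rewrite ?act_gen ?act_id;
    let Hn := fresh "Hn" in move=> Hn; exact: Hn
  end.

Section Main.
Variables (K : TwoCategory) (A : Obj K).
Local Notation E := (Hom A A).
Local Notation C := (@Cell K A A).
Variables (T G S : E) (mu : C (T ** T) T) (eta : C (id1 A) T)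
  (u : C (id1 A) (S ** G)) (e : C (G ** S) (id1 A)).
Hypothesis Hadj : is_adjunction u e.

Definition fm := tr (Tr_comp (Tr_gen T) (Tr_gen T)) (Tr_gen T) mu.
Definition fh := tr (@Tr_id K A) (Tr_gen T) eta.
Definition fu := tr (@Tr_id K A) (Tr_comp (Tr_gen S) (Tr_gen G)) u.
Definition fe := tr (Tr_comp (Tr_gen G) (Tr_gen S)) (@Tr_id K A) e.
Definition fn (nu : C (S ** S) (S ** T)) :=
  tr (Tr_comp (Tr_gen S) (Tr_gen S)) (Tr_comp (Tr_gen S) (Tr_gen T)) nu.
Definition fs (sigma : C (id1 A) (S ** T)) :=
  tr (@Tr_id K A) (Tr_comp (Tr_gen S) (Tr_gen T)) sigma.
Definition fl (lambda : C (T ** S) (S ** T)) :=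
  tr (Tr_comp (Tr_gen T) (Tr_gen S)) (Tr_comp (Tr_gen S) (Tr_gen T)) lambda.
Definition fz (zeta : C (G ** T) (T ** G)) :=
  tr (Tr_comp (Tr_gen G) (Tr_gen T)) (Tr_comp (Tr_gen T) (Tr_gen G)) zeta.
Definition fd (delta : C G (T ** G ** G)) :=
  tr (Tr_gen G) (Tr_comp (Tr_gen T) (Tr_comp (Tr_gen G) (Tr_gen G))) delta.
Definition fep (eps : C G T) := tr (Tr_gen G) (Tr_gen T) eps.

Ltac gnat := unfold fm, fh, fu, fe, fn, fs, fl, fz, fd, fep;
  match goal with |- tr ?hX ?hY ?a _ ∘∘ _ = _ =>
    have := tr_nat hX hY a c; rewrite ?act_Tr_comp ?act_gen ?act_id ; let Hn := fresh "Hn" in move=> Hn; exact: Hn end.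

Lemma nat_m W W' (c : C W W') : fm W' ∘∘ lw T (lw T c) = lw T c ∘∘ fm W.
Proof. gnat. Qed.
Lemma nat_h W W' (c : C W W') : fh W' ∘∘ c = lw T c ∘∘ fh W.
Proof. gnat. Qed.
Lemma nat_u W W' (c : C W W') : fu W' ∘∘ c = lw S (lw G c) ∘∘ fu W.
Proof. gnat. Qed.
Lemma nat_e W W' (c : C W W') : fe W' ∘∘ lw G (lw S c) = c ∘∘ fe W.
Proof. gnat. Qed.
Lemma nat_n nu W W' (c : C W W') : fn nu W' ∘∘ lw S (lw S c) = lw S (lw T c) ∘∘ fn nu W.
Proof. gnat. Qed.
Lemma nat_s sigma W W' (c : C W W') : fs sigma W' ∘∘ c = lw S (lw T c) ∘∘ fs sigma W.
Proof. gnat. Qed.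
Lemma nat_l lambda W W' (c : C W W') :
  fl lambda W' ∘∘ lw T (lw S c) = lw S (lw T c) ∘∘ fl lambda W.
Proof. gnat. Qed.
Lemma nat_z zeta W W' (c : C W W') :
  fz zeta W' ∘∘ lw G (lw T c) = lw T (lw G c) ∘∘ fz zeta W.
Proof. gnat. Qed.
Lemma nat_d delta W W' (c : C W W') :
  fd delta W' ∘∘ lw G c = lw T (lw G (lw G c)) ∘∘ fd delta W.
Proof. gnat. Qed.

Lemma tri1 W : fe (G ** W) ∘∘ lw G (fu W) = id2 _.
Proof.
case: Hadj => H1 _.
have R1 : R (lu G ∘∘ rw e G ∘∘ asc G S G ∘∘ lw G u ∘∘ ru' G)
  (fun W => fe (G ** W) ∘∘ lw G (fu W)) by trans_to.
rewrite H1 in R1.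
exact: (R_fun R1 (R_id2 (Tr_gen G))).
Qed.
Lemma tri2 W : lw S (fe W) ∘∘ fu (S ** W) = id2 _.
Proof.
case: Hadj => _ H2.
have R1 : R (ru S ∘∘ lw S e ∘∘ asc' S G S ∘∘ rw u S ∘∘ lu' S)
  (fun W => lw S (fe W) ∘∘ fu (S ** W)) by trans_to.
rewrite H2 in R1.
exact: (R_fun R1 (R_id2 (Tr_gen S))).
Qed.

Definition zf lambda W : C (G ** (T ** W)) (T ** (G ** W)) :=
  fe (T ** (G ** W)) ∘∘ lw G (fl lambda (G ** W)) ∘∘ lw G (lw T (fu W)).
Definition df nu W : C (G ** W) (T ** (G ** (G ** W))) :=
  fe (T ** (G ** (G ** W))) ∘∘ lw G (fn nu (G ** (G ** W))) ∘∘ lw G (lw S (fu (G ** W)))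
  ∘∘ lw G (fu W).
Definition ef sigma W : C (G ** W) (T ** W) := fe (T ** W) ∘∘ lw G (fs sigma W).

Lemma Kz lambda W : lw S (zf lambda W) ∘∘ fu (T ** W) = fl lambda (G ** W) ∘∘ lw T (fu W).
Proof.
have H := mateL_inv nat_u tri2 (fl lambda (G ** W) ∘∘ lw T (fu W)); rewrite /tp in H.
by rewrite /zf -vA -lw_comp H.
Qed.
Lemma Kd nu W : lw S (df nu W) ∘∘ fu W =
  fn nu (G ** (G ** W)) ∘∘ lw S (fu (G ** W)) ∘∘ fu W.
Proof.
have H := mateL_inv nat_u tri2 (fn nu (G ** (G ** W)) ∘∘ lw S (fu (G ** W)) ∘∘ fu W).
rewrite /tp in H.
have E' : df nu W = fe (T ** (G ** (G ** W))) ∘∘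
   lw G (fn nu (G ** (G ** W)) ∘∘ lw S (fu (G ** W)) ∘∘ fu W) by rewrite /df !lw_comp !vA.
by rewrite E' H.
Qed.
Lemma Ke sigma W : lw S (ef sigma W) ∘∘ fu W = fs sigma W.
Proof.
have H := mateL_inv nat_u tri2 (fs sigma W); rewrite /tp in H.
by rewrite /ef H.
Qed.

Ltac step phiL phiR psiL psiR eqlem :=
  lazymatch goal with |- (?a = ?b) <-> (?a' = ?b') =>
    let RL := fresh "RL" in let RR := fresh "RR" in
    let RML := fresh "RML" in let RMR := fresh "RMR" in
    (have RL : R a phiL by trans_to);
    (have RR : R b phiR by trans_to);
    (have RML : R a' psiL by trans_to);
    (have RMR : R b' psiR by trans_to);
    apply: (iff_trans (R_iff RL RR)); apply: (iff_trans _ (iff_sym (R_iff RML RMR)));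
    apply: eqlem; first [natR RL | natR RR]
  end.

Lemma dbg1 lambda : R (lambda ∘∘ rw eta S ∘∘ lu' S) (fun W => fl lambda W ∘∘ fh (S ** W)).
Proof. trans_to. Qed.
Lemma dbg2 : R (lw S eta ∘∘ ru' S) (fun W => lw S (fh W)).
Proof. trans_to. Qed.
Lemma dbg3 lambda : R (mate_zeta u e lambda ∘∘ lw G eta ∘∘ ru' G) (fun W => zf lambda W ∘∘ lw G (fh W)).
Proof. trans_to. Qed.
Lemma dbg4 : R (rw eta G ∘∘ lu' G) (fun W => fh (G ** W)).
Proof. trans_to. Qed.

Lemma main_iff nu sigma lambda :
  is_wreath mu eta nu sigma lambda <->
  is_mixed_opwreath mu eta (mate_zeta u e lambda) (mate_delta u e nu) (mate_epsilon e sigma).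
Proof.
rewrite /is_wreath /is_mixed_opwreath.
apply: iff_and7.
- step (fun W => fl lambda W ∘∘ fm (S ** W))
       (fun W => lw S (fm W) ∘∘ fl lambda (T ** W) ∘∘ lw T (fl lambda W))
       (fun W => zf lambda W ∘∘ lw G (fm W))
       (fun W => fm (G ** W) ∘∘ lw T (zf lambda W) ∘∘ zf lambda (T ** W))
       (eq1 nat_u nat_e tri1 tri2 nat_m (nat_l lambda) (Kz lambda)).
- step (fun W => fl lambda W ∘∘ fh (S ** W))
       (fun W => lw S (fh W))
       (fun W => zf lambda W ∘∘ lw G (fh W))
       (fun W => fh (G ** W))
       (eq2 nat_u nat_e tri1 tri2 nat_h (Kz lambda)).
- step (fun W => lw S (fm W) ∘∘ fl lambda (T ** W) ∘∘ lw T (fs sigma W))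
       (fun W => lw S (fm W) ∘∘ fs sigma (T ** W))
       (fun W => fm W ∘∘ ef sigma (T ** W))
       (fun W => fm W ∘∘ lw T (ef sigma W) ∘∘ zf lambda W)
       (eq3 nat_e tri1 fm (nat_l lambda) (Kz lambda) (Ke sigma)).
- step (fun W => lw S (fm W) ∘∘ fn nu (T ** W) ∘∘ lw S (fl lambda W) ∘∘ fl lambda (S ** W))
       (fun W => lw S (fm W) ∘∘ fl lambda (T ** W) ∘∘ lw T (fn nu W))
       (fun W => fm (G ** (G ** W)) ∘∘ lw T (zf lambda (G ** W)) ∘∘ lw T (lw G (zf lambda W))
                 ∘∘ df nu (T ** W))
       (fun W => fm (G ** (G ** W)) ∘∘ lw T (df nu W) ∘∘ zf lambda W)
       (eq4 (m:=fm) nat_u nat_e tri1 tri2 (nat_n nu) (nat_l lambda) (Kz lambda) (Kd nu)).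
- step (fun W => lw S (fm W) ∘∘ fn nu (T ** W) ∘∘ lw S (fn nu W))
       (fun W => lw S (fm W) ∘∘ fn nu (T ** W) ∘∘ lw S (fl lambda W) ∘∘ fn nu (S ** W))
       (fun W => fm (G ** (G ** (G ** W))) ∘∘ lw T (df nu (G ** W)) ∘∘ df nu W)
       (fun W => fm (G ** (G ** (G ** W))) ∘∘ lw T (zf lambda (G ** (G ** W)))
                 ∘∘ lw T (lw G (df nu W)) ∘∘ df nu W)
       (eq5 (m:=fm) (l:=fl lambda) nat_u nat_e tri1 tri2 (nat_n nu) (Kz lambda) (Kd nu)).
- step (fun W => lw S (fm W) ∘∘ fn nu (T ** W) ∘∘ lw S (fs sigma W))
       (fun W => lw S (fh W))
       (fun W => fm (G ** W) ∘∘ lw T (ef sigma (G ** W)) ∘∘ df nu W)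
       (fun W => fh (G ** W))
       (eq6 (m:=fm) (h:=fh) nat_e tri1 tri2 (nat_n nu) (Kd nu) (Ke sigma)).
- step (fun W => lw S (fm W) ∘∘ fn nu (T ** W) ∘∘ lw S (fl lambda W) ∘∘ fs sigma (S ** W))
       (fun W => lw S (fh W))
       (fun W => fm (G ** W) ∘∘ lw T (zf lambda W) ∘∘ lw T (lw G (ef sigma W)) ∘∘ df nu W)
       (fun W => fh (G ** W))
       (eq7 (m:=fm) (h:=fh) nat_u nat_e tri1 tri2 (nat_n nu) (nat_s sigma) (Kz lambda) (Kd nu) (Ke sigma)).
Qed.

Definition inv_sigma (ep : C G T) : C (id1 A) (S ** T) := lw S ep ∘∘ u.
Definition inv_lambda (zeta : C (G ** T) (T ** G)) : C (T ** S) (S ** T) :=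
  lw S (ru T) ∘∘ lw S (lw T e) ∘∘ lw S (asc' T G S) ∘∘ lw S (rw zeta S)
  ∘∘ lw S (asc G T S) ∘∘ asc' S G (T ** S) ∘∘ rw u (T ** S) ∘∘ lu' (T ** S).
Definition inv_nu (delta : C G (T ** G ** G)) : C (S ** S) (S ** T) :=
  lw S (ru T) ∘∘ lw S (lw T e) ∘∘ lw S (lw T (lw G (lu S)))
  ∘∘ lw S (lw T (lw G (rw e S))) ∘∘ lw S (lw T (lw G (asc G S S)))
  ∘∘ lw S (lw T (asc' G G (S ** S))) ∘∘ lw S (asc' T (G ** G) (S ** S))
  ∘∘ lw S (rw delta (S ** S)) ∘∘ asc' S G (S ** S) ∘∘ rw u (S ** S) ∘∘ lu' (S ** S).

Ltac trans_pre :=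
  lazymatch goal with |- R ?a _ =>
    let a' := eval cbv beta delta [mate_zeta mate_delta mate_epsilon inv_sigma inv_lambda inv_nu] in a in
    let p := trR a' in
    apply: (R_ext p); move=> ?; clean
  end.

Lemma can1 sigma : inv_sigma (mate_epsilon e sigma) = sigma.
Proof.
apply: (R_inj (phi := fs sigma)); last exact: R_base.
trans_pre. exact: Ke.
Qed.
Lemma can2 ep : mate_epsilon e (inv_sigma ep) = ep.
Proof.
apply: (R_inj (phi := fep ep)); last exact: R_base.
trans_pre. exact: (tp_inv nat_e tri1).
Qed.
Lemma can3 lambda : inv_lambda (mate_zeta u e lambda) = lambda.
Proof.
apply: (R_inj (phi := fl lambda)); last exact: R_base.
trans_pre. exact: (Inv_l tri2 (nat_l lambda) (Kz lambda)).
Qed.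
Lemma can4 zeta : mate_zeta u e (inv_lambda zeta) = zeta.
Proof.
apply: (R_inj (phi := fz zeta)); last exact: R_base.
trans_pre. exact: (Inv_z nat_e tri1 (nat_z zeta)).
Qed.
Lemma can5 nu : inv_nu (mate_delta u e nu) = nu.
Proof.
apply: (R_inj (phi := fn nu)); last exact: R_base.
trans_pre. exact: (Inv_n nat_u tri2 (nat_n nu) (Kd nu)).
Qed.
Lemma can6 delta : mate_delta u e (inv_nu delta) = delta.
Proof.
apply: (R_inj (phi := fd delta)); last exact: R_base.
trans_pre. exact: (Inv_d nat_e tri1 (nat_d delta)).
Qed.

Definition minv (w : opwreath_data T G) : wreath_data T S :=
  let: (zeta, delta, eps) := w in (inv_nu delta, inv_sigma eps, inv_lambda zeta).

Lemma mate_bij : bijective (mate (T:=T) u e).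
Proof.
exists minv.
- by case=> [[nu sigma] lambda] /=; rewrite can1 can3 can5.
- by case=> [[zeta delta] eps] /=; rewrite can2 can4 can6.
Qed.

End Main.

Theorem proposition3p4 (K : TwoCategory) (A : Obj K)
  (T : Hom A A) (mu : Cell (comp1 T T) T) (eta : Cell (id1 A) T)
  (G S : Hom A A) (u : Cell (id1 A) (comp1 S G)) (e : Cell (comp1 G S) (id1 A)) :
  is_monad mu eta ->
  is_adjunction u e ->
  bijective (mate (T:=T) u e) /\
  (forall (nu : Cell (comp1 S S) (comp1 S T)) (sigma : Cell (id1 A) (comp1 S T))
          (lambda : Cell (comp1 T S) (comp1 S T)),
      is_wreath mu eta nu sigma lambda <->
      is_mixed_opwreath mu eta (mate_zeta (T:=T) u e lambda) (mate_delta (T:=T) u e nu)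
        (mate_epsilon (T:=T) e sigma)).
Proof.
move=> _ Hadj; split; first exact: mate_bij.
move=> nu sigma lambda; exact: main_iff.
Qed.
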